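(* Let $K$ be a field, $n\ge2$, and $\vartheta$ any one of the four types (left, right, pre-two-sided, two-sided). A $K$-subspace $V\subset M_n(K)$ is a minimal non-trivial $\vartheta$-Mathieu subspace of $M_n(K)$ if and only if $V=KA$ for some nonzero $A\in M_n(K)$ which is not a quasi-idempotent.
   Context: $M_n(K)$ is the algebra of $n\times n$ matrices over $K$. $A$ is a quasi-idempotent if $A^2=rA$ for some $r\in K^\times$. A subspace is non-trivial if it is neither $0$ nor the whole algebra; a minimal non-trivial $\vartheta$-Mathieu subspace is one minimal under inclusion among non-trivial $\vartheta$-Mathieu subspaces. A $K$-subspace $V$ of an algebra $\mathcal A$ is a left (resp. right) Mathieu subspace if whenever $a^m\in V$ for all $m\ge1$, then for every $b\in\mathcal A$, $ba^m\in V$ (resp. $a^mb\in V$) for all sufficiently large $m$; pre-two-sided if both left and right; two-sided if whenever $a^m\in V$ for all $m\ge1$, for all $b,c\in\mathcal A$, $ba^mc\in V$ for all sufficiently large $m$. *)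

(* Defs.v *)
From HB Require Import structures.
From mathcomp Require Import all_boot all_order all_algebra.
Set Implicit Arguments. Unset Strict Implicit. Unset Printing Implicit Defensive.
Import GRing.Theory.
Local Open Scope ring_scope.

Inductive mathieu_type := MLeft | MRight | MPreTwoSided | MTwoSided.

Section Mathieu.
Variable R : pzRingType.

Definition all_pows_in (V : {pred R}) (a : R) : Prop :=
  forall m : nat, (0 < m)%N -> a ^+ m \in V.

Definition left_mathieu (V : {pred R}) : Prop :=
  forall a, all_pows_in V a ->
  forall b, exists N : nat, forall m : nat, (N <= m)%N -> b * a ^+ m \in V.

Definition right_mathieu (V : {pred R}) : Prop :=
  forall a, all_pows_in V a ->
  forall b, exists N : nat, forall m : nat, (N <= m)%N -> a ^+ m * b \in V.

Definition pre_two_sided_mathieu (V : {pred R}) : Prop :=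
  left_mathieu V /\ right_mathieu V.

Definition two_sided_mathieu (V : {pred R}) : Prop :=
  forall a, all_pows_in V a ->
  forall b c, exists N : nat, forall m : nat, (N <= m)%N -> b * a ^+ m * c \in V.

Definition is_mathieu (t : mathieu_type) (V : {pred R}) : Prop :=
  match t with
  | MLeft => left_mathieu V
  | MRight => right_mathieu V
  | MPreTwoSided => pre_two_sided_mathieu V
  | MTwoSided => two_sided_mathieu V
  end.
End Mathieu.

Definition quasi_idempotent (K : fieldType) (n : nat) (A : 'M[K]_n.+1) : Prop :=
  exists r : K, r != 0 /\ A * A = r *: A.

Definition nontrivial_subspace (K : fieldType) (n : nat) (V : {vspace 'M[K]_n.+1}) : Prop :=
  V != 0%VS /\ V != fullv.

Definition minimal_nontrivial_mathieu (t : mathieu_type) (K : fieldType) (n : nat)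
  (V : {vspace 'M[K]_n.+1}) : Prop :=
  [/\ is_mathieu t (fun x => x \in V), nontrivial_subspace V &
      forall W : {vspace 'M[K]_n.+1},
        is_mathieu t (fun x => x \in W) -> nontrivial_subspace W ->
        (W <= V)%VS -> W = V].

(* Main.v *)
Require Import Defs.
From HB Require Import structures.
From mathcomp Require Import all_boot all_order all_algebra.
From mathcomp Require Import ring.
From Stdlib Require Import Classical_Prop.
Set Implicit Arguments. Unset Strict Implicit.
Set Implicit Arguments. Unset Strict Implicit.
Import GRing.Theory.
Local Open Scope ring_scope.

Section M.
Variables (K : fieldType) (n : nat).
Local Notation M := 'M[K]_n.+2.

Lemma exists_nz (A : M) : A != 0 -> exists i j, A i j != 0.
Proof.
move=> nzA; case: (pickP (fun ij : 'I_n.+2 * 'I_n.+2 => A ij.1 ij.2 != 0)).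
  by move=> [i j] /= h; exists i, j.
move=> h; case/eqP: nzA; apply/matrixP => i j; rewrite mxE.
by move: (h (i, j)) => /= /negbFE/eqP.
Qed.

Lemma other (j : 'I_n.+2) : exists j' : 'I_n.+2, j' != j.
Proof.
case: (eqVneq j ord0) => [->|h]; last by exists ord0; rewrite eq_sym.
by exists ord_max; apply/eqP => /(congr1 val).
Qed.

Lemma sum2 (j j' : 'I_n.+2) (F : 'I_n.+2 -> K) (a c : K) : j' != j ->
  \sum_k F k * (a * (k == j')%:R - c * (k == j)%:R) = a * F j' - c * F j.
Proof.
move=> ne.
rewrite (bigD1 j') //= (bigD1 j) 1?eq_sym //= big1; last first.
  move=> k /andP[h1 h2]; by rewrite (negbTE h1) (negbTE h2) /=; ring.
by rewrite !eqxx eq_sym (negbTE ne) /=; ring.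
Qed.

Lemma left_nil (A : M) : A != 0 -> exists b : M, b * A != 0 /\ (b * A) * (b * A) = 0.
Proof.
move=> /exists_nz [i [j nz]]; have [j' ne] := other j.
pose f (r : 'I_n.+2) := A i j * (r == j')%:R - A i j' * (r == j)%:R.
pose b : M := \matrix_(r, k) (f r * (k == i)%:R).
have XE r s : (b * A) r s = f r * A i s.
  rewrite -mulmxE mxE (bigD1 i) //= big1 ?mxE ?eqxx; first by rewrite /=; ring.
  by move=> k nk; rewrite mxE (negbTE nk) /=; ring.
exists b; split.
  apply/eqP => /matrixP /(_ j' j); rewrite XE mxE /f eqxx (negbTE ne).
  by move/eqP; rewrite mulr0 subr0 mulr1 mulf_eq0 (negbTE nz).
set X := _ * _ in XE *; apply/matrixP => r s; rewrite -mulmxE !mxE.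
transitivity (f r * A i s * \sum_k (A i k * f k)).
  by rewrite big_distrr; apply: eq_bigr => k _; rewrite !XE; change ((f r * A i k) * (f k * A i s) = (f r * A i s) * (A i k * f k)); ring.
by rewrite sum2 //; ring.
Qed.

Lemma right_nil (A : M) : A != 0 -> exists b : M, A * b != 0 /\ (A * b) * (A * b) = 0.
Proof.
move=> /exists_nz [i [j nz]]; have [i' ne] := other i.
pose g (s : 'I_n.+2) := A i j * (s == i')%:R - A i' j * (s == i)%:R.
pose b : M := \matrix_(k, s) ((k == j)%:R * g s).
have XE r s : (A * b) r s = A r j * g s.
  rewrite -mulmxE mxE (bigD1 j) //= big1 ?mxE ?eqxx; first by rewrite /=; ring.
  by move=> k nk; rewrite mxE (negbTE nk) /=; ring.
exists b; split.
  apply/eqP => /matrixP /(_ i i'); rewrite XE mxE /g eqxx (negbTE ne).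
  by move/eqP; rewrite mulr0 subr0 mulr1 mulf_eq0 (negbTE nz).
set X := _ * _ in XE *; apply/matrixP => r s; rewrite -mulmxE !mxE.
transitivity (A r j * g s * \sum_k (A k j * g k)).
  by rewrite big_distrr; apply: eq_bigr => k _; rewrite !XE; change ((A r j * g k) * (A k j * g s) = (A r j * g s) * (A k j * g k)); ring.
by rewrite sum2 //; ring.
Qed.

Lemma qi_pow (A : M) r : A * A = r *: A -> forall m, A ^+ m.+1 = r ^+ m *: A.
Proof.
move=> h; elim=> [|m IH]; first by rewrite expr1 expr0 scale1r.
by rewrite exprS IH -scalerAr h scalerA exprS mulrC.
Qed.

Lemma mathieu_LR t (V : {pred M}) : is_mathieu t V -> left_mathieu V \/ right_mathieu V.
Proof.
case: t => /=; [by left | by right | by case; left |].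
move=> h; left => a ha b; have [N HN] := h a ha b 1.
by exists N => m /HN; rewrite mulr1.
Qed.

Lemma not_qi (X : M) : X != 0 -> X * X = 0 -> ~ quasi_idempotent X.
Proof.
move=> nz h [r [nr e]]; move: e; rewrite h => /esym/eqP.
by rewrite scaler_eq0 (negbTE nr) (negbTE nz).
Qed.

Lemma qi_sub t (V : {vspace M}) (A : M) : is_mathieu t (fun x => x \in V) ->
  A \in V -> A != 0 -> quasi_idempotent A ->
  exists X, [/\ X \in V, X != 0 & ~ quasi_idempotent X].
Proof.
move=> /mathieu_LR hM AV nzA [r [nr e]].
have pw : all_pows_in (fun x => x \in V) A.
  by case=> // m _; rewrite (@qi_pow A r e) memvZ.
have rN m : r ^+ m != 0 by rewrite expf_neq0.
case: hM => hM.
  have [b [nz nil]] := @left_nil A nzA; exists (b * A); split => //; last exact: not_qi.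
  have [N HN] := hM A pw b; have := HN N.+1 (leqnSn N).
  rewrite (@qi_pow A r e) -scalerAr => h.
  by rewrite -(scalerK (rN N) (b * A)) memvZ.
have [b [nz nil]] := @right_nil A nzA; exists (A * b); split => //; last exact: not_qi.
have [N HN] := hM A pw b; have := HN N.+1 (leqnSn N).
rewrite (@qi_pow A r e) -scalerAl => h.
by rewrite -(scalerK (rN N) (A * b)) memvZ.
Qed.

Lemma line_sq (A : M) a : ~ quasi_idempotent A ->
  all_pows_in (fun x => x \in <[A]>%VS) a -> a * a = 0.
Proof.
move=> nqi ha; have /vlineP [k ek] := ha 1%N isT; rewrite expr1 in ek.
have /vlineP [d] := ha 2%N isT; rewrite ek.
have [->|nk] := eqVneq k 0; first by rewrite scale0r mul0r.
rewrite expr2 -scalerAl -scalerAr scalerA => e.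
have e2 : A * A = (d / (k * k)) *: A.
  by rewrite -[LHS](scalerK (mulf_neq0 nk nk)) e scalerA mulrC.
have [d0|nd] := eqVneq (d / (k * k)) 0.
  by rewrite e2 d0 !scale0r scaler0.
by case: nqi; exists (d / (k * k)).
Qed.

Lemma line_mathieu t (A : M) : ~ quasi_idempotent A ->
  is_mathieu t (fun x => x \in <[A]>%VS).
Proof.
move=> nqi.
have P a m : all_pows_in (fun x => x \in <[A]>%VS) a -> (2 <= m)%N -> a ^+ m = 0.
  move=> ha hm; rewrite -(subnK hm) exprD expr2 (@line_sq A a nqi ha) mulr0 //.
case: t => /=; first (by move=> a ha b; exists 2%N => m hm; rewrite P // mulr0 mem0v);
  first (by move=> a ha b; exists 2%N => m hm; rewrite P // mul0r mem0v);
  last (by move=> a ha b c; exists 2%N => m hm; rewrite P // mulr0 mul0r mem0v).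
split; first (by move=> a ha b; exists 2%N => m hm; rewrite P // mulr0 mem0v).
by move=> a ha b; exists 2%N => m hm; rewrite P // mul0r mem0v.
Qed.

Lemma line_nontriv (A : M) : A != 0 -> nontrivial_subspace <[A]>%VS.
Proof.
move=> nz; split.
  by rewrite -dimv_eq0 dim_vline nz.
apply/eqP => e; have := dim_vline A; rewrite e dimvf dim_matrix nz.
by [].
Qed.

Lemma line_minimal (A : M) (W : {vspace M}) : A != 0 -> nontrivial_subspace W ->
  (W <= <[A]>)%VS -> W = <[A]>%VS.
Proof.
move=> nz [nW _] sub; apply/eqP; rewrite eqEdim sub dim_vline nz /=.
by rewrite lt0n dimv_eq0.
Qed.

End M.

Theorem proposition5p5 (K : fieldType) (n : nat) (t : mathieu_type)
  (V : {vspace 'M[K]_n.+2}) :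
  minimal_nontrivial_mathieu t V <->
  exists A : 'M[K]_n.+2, [/\ A != 0, ~ quasi_idempotent A & V = <[A]>%VS].
Proof.
split.
  case=> hM [nV0 nVf] hmin.
  have [X [XV nX nqi]] : exists X, [/\ X \in V, X != 0 & ~ quasi_idempotent X].
    have AV := memv_pick V; have nA : vpick V != 0 by rewrite vpick0.
    case: (classic (quasi_idempotent (vpick V))) => q.
      exact: (qi_sub hM AV nA q).
    by exists (vpick V).
  exists X; split => //; symmetry; apply: hmin.
  - exact: line_mathieu.
  - exact: line_nontriv.
  - by rewrite -memvE.
case=> A [nz nqi ->]; split.
- exact: line_mathieu.
- exact: line_nontriv.
- by move=> W _ hW sub; apply: line_minimal.
Qed.
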